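(* Let $\nu\geq3$ be an integer. Let $M=\{u=F\}$ and $M'=\{u'=F'\}$ be rigid real-analytic hypersurfaces in $\mathbb{C}^3$ with $$F=m+G_3+\cdots+G_{\nu-1}+G_\nu+O(\nu+1),\qquad F'=m+G'_3+\cdots+G'_{\nu-1}+G'_\nu+O(\nu+1),$$ where $m=\frac{z\bar z+\frac12z^2\bar\zeta+\frac12\bar z^2\zeta}{1-\zeta\bar\zeta}$ and each $G_\mu,G'_\mu$ is weighted homogeneous of weight $\mu$. Suppose the biholomorphism $$z'=z+f_{\nu-1}(z,\zeta),\qquad\zeta'=\zeta+g_{\nu-2}(z,\zeta),\qquad w'=w+h_\nu(z,\zeta),$$ with $f_{\nu-1},g_{\nu-2},h_\nu$ holomorphic and weighted homogeneous of weights $\nu-1,\nu-2,\nu$ respectively, maps $M$ into $M'$. Then $G'_\mu=G_\mu$ for $3\leq\mu\leq\nu-1$, while $$G'_\nu=G_\nu-2\operatorname{Re}\Big\{\frac{\bar z+z\bar\zeta}{1-\zeta\bar\zeta}f_{\nu-1}(z,\zeta)+\frac{(\bar z+z\bar\zeta)^2}{2(1-\zeta\bar\zeta)^2}g_{\nu-2}(z,\zeta)-\frac12h_\nu(z,\zeta)\Big\},$$ all functions being evaluated at $(z,\zeta,\bar z,\bar\zeta)$.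
   Context: Coordinates on $\mathbb{C}^3$ are $(z,\zeta,w)$, $w=u+iv$. Weights: $[z]=[\bar z]=1$, $[\zeta]=[\bar\zeta]=0$, $[w]=2$; the monomial $z^a\zeta^b\bar z^c\bar\zeta^d$ has weight $a+c$. A convergent power series is weighted homogeneous of weight $\mu$ if all its monomials have weight $\mu$ (e.g. a holomorphic $f_{\mu}(z,\zeta)$ of weight $\mu$ is $z^\mu\phi(\zeta)$). $O(\mu)$ denotes a convergent power series all of whose monomials have weight $\geq\mu$. $2\operatorname{Re}\{X\}=X+\overline{X}$. *)

(* Defs.v *)
From Stdlib Require Import Reals.
From Coquelicot Require Import Coquelicot.
Open Scope R_scope.

Fixpoint csum (u : nat -> C) (N : nat) : C :=
  match N with O => u O | S n => Cplus (csum u n) (u (S n)) end.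
Fixpoint rsum (u : nat -> R) (N : nat) : R :=
  match N with O => u O | S n => rsum u n + u (S n) end.

(* A power series in the four independent variables (z, zeta, zbar, zetabar):
   s a b c d is the coefficient of z^a zeta^b zbar^c zetabar^d. *)
Definition ps4 := nat -> nat -> nat -> nat -> C.

Definition mono4 (a b c d : nat) (x1 x2 x3 x4 : C) : C :=
  Cmult (Cmult (Cmult (Cpow x1 a) (Cpow x2 b)) (Cpow x3 c)) (Cpow x4 d).

Definition psum4 (s : ps4) (x1 x2 x3 x4 : C) (N : nat) : C :=
  csum (fun a => csum (fun b => csum (fun c => csum (fun d =>
    Cmult (s a b c d) (mono4 a b c d x1 x2 x3 x4)) N) N) N) N.

Definition ps4_convergent (s : ps4) : Prop :=
  exists r, 0 < r /\ exists B, forall N,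
    rsum (fun a => rsum (fun b => rsum (fun c => rsum (fun d =>
      Cmod (s a b c d) * r ^ (a + b + c + d)) N) N) N) N <= B.

Definition ps4_sum (s : ps4) (x1 x2 x3 x4 : C) : C :=
  (real (Lim_seq (fun N => Re (psum4 s x1 x2 x3 x4 N))),
   real (Lim_seq (fun N => Im (psum4 s x1 x2 x3 x4 N)))).

Definition ev4 (s : ps4) (z zeta : C) : C :=
  ps4_sum s z zeta (Cconj z) (Cconj zeta).

Definition ps4_whom (mu : nat) (s : ps4) : Prop :=
  forall a b c d, (a + c)%nat <> mu -> s a b c d = RtoC 0.
Definition ps4_O (mu : nat) (s : ps4) : Prop :=
  forall a b c d, (a + c < mu)%nat -> s a b c d = RtoC 0.

Definition ps2 := nat -> nat -> C.
Definition psum2 (s : ps2) (z zeta : C) (N : nat) : C :=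
  csum (fun a => csum (fun b => Cmult (s a b) (Cmult (Cpow z a) (Cpow zeta b))) N) N.
Definition ps2_convergent (s : ps2) : Prop :=
  exists r, 0 < r /\ exists B, forall N,
    rsum (fun a => rsum (fun b => Cmod (s a b) * r ^ (a + b)) N) N <= B.
Definition ev2 (s : ps2) (z zeta : C) : C :=
  (real (Lim_seq (fun N => Re (psum2 s z zeta N))),
   real (Lim_seq (fun N => Im (psum2 s z zeta N)))).
Definition ps2_whom (k : nat) (s : ps2) : Prop :=
  forall a b, a <> k -> s a b = RtoC 0.

Definition mfun (z zeta : C) : C :=
  Cdiv (Cplus (Cplus (Cmult z (Cconj z))
                     (Cmult (Cmult (RtoC (/2)) (Cpow z 2)) (Cconj zeta)))
              (Cmult (Cmult (RtoC (/2)) (Cpow (Cconj z) 2)) zeta))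
       (Cminus (RtoC 1) (Cmult zeta (Cconj zeta))).

Definition Fdef (nu : nat) (G : nat -> ps4) (Rm : ps4) (z zeta : C) : C :=
  Cplus (Cplus (mfun z zeta) (csum (fun k => ev4 (G (3 + k)%nat) z zeta) (nu - 3)))
        (ev4 Rm z zeta).

Definition twoRe (X : C) : C := Cplus X (Cconj X).

Definition corr (f g h : ps2) (z zeta : C) : C :=
  let q := Cminus (RtoC 1) (Cmult zeta (Cconj zeta)) in
  let l := Cplus (Cconj z) (Cmult z (Cconj zeta)) in
  Cminus (Cplus (Cmult (Cdiv l q) (ev2 f z zeta))
                (Cmult (Cdiv (Cpow l 2) (Cmult (RtoC 2) (Cpow q 2))) (ev2 g z zeta)))
         (Cmult (RtoC (/2)) (ev2 h z zeta)).

(* Main.v *)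
Require Import Defs.
From Stdlib Require Import Reals Lra Lia.
From Coquelicot Require Import Coquelicot.
Open Scope R_scope.
Ltac Cring := match goal with |- ?a = ?b => change (@eq C a b); ring end.

Lemma rsum_ext u v N : (forall k, (k <= N)%nat -> u k = v k) -> rsum u N = rsum v N.
Proof. induction N; intros H; simpl. apply H; lia. rewrite IHN by (intros; apply H; lia). rewrite H by lia. auto. Qed.
Lemma csum_ext u v N : (forall k, (k <= N)%nat -> u k = v k) -> csum u N = csum v N.
Proof. induction N; intros H; simpl. apply H; lia. rewrite IHN by (intros; apply H; lia). rewrite H by lia. auto. Qed.
Lemma rsum_le u v N : (forall k, u k <= v k) -> rsum u N <= rsum v N.
Proof. induction N; intros H; simpl. apply H. specialize (IHN H). specialize (H (S N)). lra. Qed.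
Lemma rsum_nonneg u N : (forall k, 0 <= u k) -> 0 <= rsum u N.
Proof. induction N; intros H; simpl. apply H. specialize (IHN H). specialize (H (S N)). lra. Qed.
Lemma rsum_plus u v N : rsum (fun k => u k + v k) N = rsum u N + rsum v N.
Proof. induction N; simpl; lra. Qed.
Lemma rsum_minus u v N : rsum (fun k => u k - v k) N = rsum u N - rsum v N.
Proof. induction N; simpl; lra. Qed.
Lemma rsum_scal c u N : rsum (fun k => c * u k) N = c * rsum u N.
Proof. induction N; simpl; lra. Qed.
Lemma rsum_abs u N : Rabs (rsum u N) <= rsum (fun k => Rabs (u k)) N.
Proof. induction N; simpl. lra. eapply Rle_trans. apply Rabs_triang. lra. Qed.
Lemma rsum_le_S u v N : (forall k, 0 <= u k <= v k) -> rsum u N <= rsum v (S N).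
Proof. intros H. simpl. assert (rsum u N <= rsum v N) by (apply rsum_le; intros; apply H).
  specialize (H (S N)). lra. Qed.
Lemma rsum_shift u N : rsum u (S N) = u O + rsum (fun k => u (S k)) N.
Proof. induction N. simpl; lra. change (rsum u (S (S N))) with (rsum u (S N) + u (S (S N))).
  rewrite IHN. simpl. lra. Qed.

Lemma Re_csum u N : Re (csum u N) = rsum (fun k => Re (u k)) N.
Proof. induction N; simpl; auto. rewrite <- IHN. reflexivity. Qed.
Lemma Im_csum u N : Im (csum u N) = rsum (fun k => Im (u k)) N.
Proof. induction N; simpl; auto. rewrite <- IHN. reflexivity. Qed.
Lemma Cmod_csum u N : Cmod (csum u N) <= rsum (fun k => Cmod (u k)) N.
Proof. induction N; simpl. lra. eapply Rle_trans. apply Cmod_triangle. lra. Qed.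
Lemma csum_scal c u N : csum (fun k => Cmult c (u k)) N = Cmult c (csum u N).
Proof. induction N; simpl; auto. rewrite IHN. ring. Qed.
Lemma csum_minus u v N : csum (fun k => Cminus (u k) (v k)) N = Cminus (csum u N) (csum v N).
Proof. induction N; simpl; auto. rewrite IHN. ring. Qed.

Definition rsum4 (v : nat -> nat -> nat -> nat -> R) N :=
  rsum (fun a => rsum (fun b => rsum (fun c => rsum (fun d => v a b c d) N) N) N) N.

Lemma rsum4_le u v N : (forall a b c d, u a b c d <= v a b c d) -> rsum4 u N <= rsum4 v N.
Proof. intros H. unfold rsum4. repeat (apply rsum_le; intros). apply H. Qed.
Lemma rsum4_nonneg u N : (forall a b c d, 0 <= u a b c d) -> 0 <= rsum4 u N.
Proof. intros H. unfold rsum4. repeat (apply rsum_nonneg; intros). apply H. Qed.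
Lemma rsum4_minus u v N : rsum4 (fun a b c d => u a b c d - v a b c d) N = rsum4 u N - rsum4 v N.
Proof. unfold rsum4. rewrite <- rsum_minus. apply rsum_ext; intros.
  rewrite <- rsum_minus. apply rsum_ext; intros.
  rewrite <- rsum_minus. apply rsum_ext; intros.
  rewrite <- rsum_minus. auto. Qed.
Lemma rsum4_scal k v N : rsum4 (fun a b c d => k * v a b c d) N = k * rsum4 v N.
Proof. unfold rsum4. rewrite <- rsum_scal. apply rsum_ext; intros.
  rewrite <- rsum_scal. apply rsum_ext; intros.
  rewrite <- rsum_scal. apply rsum_ext; intros.
  rewrite <- rsum_scal. auto. Qed.
Lemma rsum4_abs v N : Rabs (rsum4 v N) <= rsum4 (fun a b c d => Rabs (v a b c d)) N.
Proof. unfold rsum4. eapply Rle_trans. apply rsum_abs. apply rsum_le; intro a.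
  eapply Rle_trans. apply rsum_abs. apply rsum_le; intro b.
  eapply Rle_trans. apply rsum_abs. apply rsum_le; intro c.
  apply rsum_abs. Qed.
Lemma rsum4_incr v N : (forall a b c d, 0 <= v a b c d) -> rsum4 v N <= rsum4 v (S N).
Proof. intros H. unfold rsum4. apply rsum_le_S; intro a; split.
  repeat (apply rsum_nonneg; intros). apply H.
  apply rsum_le_S; intro b; split. repeat (apply rsum_nonneg; intros). apply H.
  apply rsum_le_S; intro c; split. repeat (apply rsum_nonneg; intros). apply H.
  apply rsum_le_S; intro d; split; [apply H| lra]. Qed.

Lemma Re_psum4 s x1 x2 x3 x4 N :
  Re (psum4 s x1 x2 x3 x4 N) = rsum4 (fun a b c d => Re (Cmult (s a b c d) (mono4 a b c d x1 x2 x3 x4))) N.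
Proof. unfold psum4, rsum4. rewrite Re_csum. apply rsum_ext; intros.
  rewrite Re_csum. apply rsum_ext; intros. rewrite Re_csum. apply rsum_ext; intros.
  rewrite Re_csum. auto. Qed.
Lemma Im_psum4 s x1 x2 x3 x4 N :
  Im (psum4 s x1 x2 x3 x4 N) = rsum4 (fun a b c d => Im (Cmult (s a b c d) (mono4 a b c d x1 x2 x3 x4))) N.
Proof. unfold psum4, rsum4. rewrite Im_csum. apply rsum_ext; intros.
  rewrite Im_csum. apply rsum_ext; intros. rewrite Im_csum. apply rsum_ext; intros.
  rewrite Im_csum. auto. Qed.

Lemma lim_bound u M : (forall N, Rabs (u N) <= M) -> Rabs (real (Lim_seq u)) <= M.
Proof.
  intros H.
  assert (H1 : Rbar_le (Lim_seq u) (Lim_seq (fun _ => M))).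
  { apply Lim_seq_le_loc. exists O. intros n _. specialize (H n). apply Rabs_le_between in H; lra. }
  assert (H2 : Rbar_le (Lim_seq (fun _ => -M)) (Lim_seq u)).
  { apply Lim_seq_le_loc. exists O. intros n _. specialize (H n). apply Rabs_le_between in H; lra. }
  rewrite Lim_seq_const in H1, H2.
  assert (0 <= M) by (specialize (H O); pose proof (Rabs_pos (u O)); lra).
  destruct (Lim_seq u) as [l| |]; simpl in *; try contradiction.
  all: try (apply Rabs_le_between; lra); rewrite Rabs_R0; lra.
Qed.

Lemma lim_scal c u : real (Lim_seq (fun N => c * u N)) = c * real (Lim_seq u).
Proof.
  rewrite Lim_seq_scal_l. destruct (Lim_seq u) as [l| |]; simpl; auto;
  unfold Rbar_mult; simpl; destruct (Rle_dec 0 c); try destruct (Rle_lt_or_eq_dec 0 c r);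
  simpl; try lra. Qed.

Lemma lim_minus u v : ex_finite_lim_seq u -> ex_finite_lim_seq v ->
  real (Lim_seq u) - real (Lim_seq v) = real (Lim_seq (fun N => u N - v N)).
Proof.
  intros Hu Hv. pose proof (Lim_seq_correct' _ Hu) as Lu. pose proof (Lim_seq_correct' _ Hv) as Lv.
  rewrite (is_lim_seq_unique _ _ (is_lim_seq_minus' _ _ _ _ Lu Lv)). reflexivity. Qed.

Lemma conv4 (w W : nat -> nat -> nat -> nat -> R) B :
  (forall a b c d, Rabs (w a b c d) <= W a b c d) -> (forall N, rsum4 W N <= B) ->
  ex_finite_lim_seq (fun N => rsum4 w N).
Proof.
  intros Hw HB.
  set (wp := fun a b c d => (W a b c d + w a b c d)/2).
  set (wn := fun a b c d => (W a b c d - w a b c d)/2).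
  assert (Hp : forall a b c d, 0 <= wp a b c d <= W a b c d).
  { intros; unfold wp; specialize (Hw a b c d); apply Rabs_le_between in Hw; lra. }
  assert (Hn : forall a b c d, 0 <= wn a b c d <= W a b c d).
  { intros; unfold wn; specialize (Hw a b c d); apply Rabs_le_between in Hw; lra. }
  assert (E : forall N, rsum4 w N = rsum4 wp N - rsum4 wn N).
  { intros. rewrite <- rsum4_minus. unfold rsum4. repeat (apply rsum_ext; intros). unfold wp, wn; lra. }
  assert (Cp : ex_finite_lim_seq (fun N => rsum4 wp N)).
  { apply ex_finite_lim_seq_incr with B. intros; apply rsum4_incr; apply Hp.
    intros. eapply Rle_trans. apply rsum4_le. intros; apply Hp. apply HB. }
  assert (Cn : ex_finite_lim_seq (fun N => rsum4 wn N)).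
  { apply ex_finite_lim_seq_incr with B. intros; apply rsum4_incr; apply Hn.
    intros. eapply Rle_trans. apply rsum4_le. intros; apply Hn. apply HB. }
  destruct Cp as [lp Lp]. destruct Cn as [ln Ln]. exists (lp - ln).
  eapply is_lim_seq_ext. intros; symmetry; apply E. apply is_lim_seq_minus'; auto.
Qed.

Lemma Cmod_mono4 a b c d x1 x2 x3 x4 :
  Cmod (mono4 a b c d x1 x2 x3 x4) = Cmod x1 ^ a * Cmod x2 ^ b * Cmod x3 ^ c * Cmod x4 ^ d.
Proof. unfold mono4. rewrite !Cmod_mult, !Cmod_pow. auto. Qed.

Lemma RtoC_pow (t : R) n : Cpow (RtoC t) n = RtoC (t ^ n).
Proof. induction n; simpl. auto. rewrite IHn. unfold RtoC, Cmult. simpl. f_equal; ring. Qed.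

Lemma Cpow_mult x y n : Cpow (Cmult x y) n = Cmult (Cpow x n) (Cpow y n).
Proof. induction n; simpl. unfold Cmult, RtoC; simpl; f_equal; ring. rewrite IHn. Cring. Qed.

Lemma mono4_scal a b c d (t : R) x1 x2 x3 x4 :
  mono4 a b c d (Cmult (RtoC t) x1) x2 (Cmult (RtoC t) x3) x4 =
  Cmult (RtoC (t ^ (a + c))) (mono4 a b c d x1 x2 x3 x4).
Proof. unfold mono4. rewrite !Cpow_mult, !RtoC_pow, pow_add.
  replace (RtoC (t ^ a * t ^ c)) with (Cmult (RtoC (t^a)) (RtoC (t^c))).
  Cring. unfold RtoC, Cmult; simpl; f_equal; ring. Qed.

Lemma pow_lip (x y : C) rho delta a : 0 <= rho -> Cmod x <= rho -> Cmod y <= rho ->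
  Cmod (Cminus x y) <= delta ->
  rho * Cmod (Cminus (Cpow x a) (Cpow y a)) <= INR a * rho ^ a * delta.
Proof.
  intros Hr Hx Hy Hd. induction a.
  - simpl. replace (Cminus 1 1) with (RtoC 0) by (unfold Cminus, Cplus, Copp, RtoC; simpl; f_equal; ring).
    rewrite Cmod_0. lra.
  - simpl Cpow. replace (Cminus (Cmult x (Cpow x a)) (Cmult y (Cpow y a))) with
      (Cplus (Cmult x (Cminus (Cpow x a) (Cpow y a))) (Cmult (Cminus x y) (Cpow y a))) by Cring.
    assert (0 <= delta) by (pose proof (Cmod_ge_0 (Cminus x y)); lra).
    eapply Rle_trans. apply Rmult_le_compat_l. auto. apply Cmod_triangle.
    rewrite !Cmod_mult, Cmod_pow. rewrite S_INR. simpl pow.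
    assert (Cmod y ^ a <= rho ^ a) by (apply pow_incr; split; auto; apply Cmod_ge_0).
    assert (0 <= Cmod (Cminus (Cpow x a) (Cpow y a))) by apply Cmod_ge_0.
    assert (0 <= Cmod y ^ a) by (apply pow_le; apply Cmod_ge_0).
    assert (0 <= rho ^ a) by (apply pow_le; auto).
    assert (0 <= Cmod x) by apply Cmod_ge_0.
    assert (rho * (Cmod x * Cmod (Cminus (Cpow x a) (Cpow y a))) <= rho * (INR a * rho ^ a * delta)).
    { replace (rho * (Cmod x * Cmod (Cminus (Cpow x a) (Cpow y a)))) with
        (Cmod x * (rho * Cmod (Cminus (Cpow x a) (Cpow y a)))) by ring.
      apply Rmult_le_compat; auto. apply Rmult_le_pos; auto. }
    assert (rho * (Cmod (Cminus x y) * Cmod y ^ a) <= rho * (delta * rho ^ a)).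
    { apply Rmult_le_compat_l; auto. apply Rmult_le_compat; auto. apply Cmod_ge_0. }
    nra.
Qed.

Lemma prod_lip (X X' Y Y' : C) rho delta p q : 0 <= rho -> 0 <= delta ->
  Cmod X <= rho ^ p -> Cmod X' <= rho ^ p -> rho * Cmod (Cminus X X') <= INR p * rho ^ p * delta ->
  Cmod Y <= rho ^ q -> Cmod Y' <= rho ^ q -> rho * Cmod (Cminus Y Y') <= INR q * rho ^ q * delta ->
  Cmod (Cmult X Y) <= rho ^ (p + q) /\ Cmod (Cmult X' Y') <= rho ^ (p + q) /\
  rho * Cmod (Cminus (Cmult X Y) (Cmult X' Y')) <= INR (p + q) * rho ^ (p + q) * delta.
Proof.
  intros Hr Hd HX HX' HXX HY HY' HYY. rewrite !Cmod_mult, pow_add, plus_INR.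
  pose proof (Cmod_ge_0 X). pose proof (Cmod_ge_0 X'). pose proof (Cmod_ge_0 Y). pose proof (Cmod_ge_0 Y').
  assert (0 <= rho ^ p) by (apply pow_le; auto). assert (0 <= rho ^ q) by (apply pow_le; auto).
  split; [apply Rmult_le_compat; auto|split; [apply Rmult_le_compat; auto|]].
  replace (Cminus (Cmult X Y) (Cmult X' Y')) with
      (Cplus (Cmult X (Cminus Y Y')) (Cmult (Cminus X X') Y')) by Cring.
  eapply Rle_trans. apply Rmult_le_compat_l. auto. apply Cmod_triangle.
  rewrite !Cmod_mult.
  pose proof (Cmod_ge_0 (Cminus Y Y')). pose proof (Cmod_ge_0 (Cminus X X')).
  assert (rho * (Cmod X * Cmod (Cminus Y Y')) <= rho ^ p * (INR q * rho ^ q * delta)).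
  { replace (rho * (Cmod X * Cmod (Cminus Y Y'))) with (Cmod X * (rho * Cmod (Cminus Y Y'))) by ring.
    apply Rmult_le_compat; auto. apply Rmult_le_pos; auto. }
  assert (rho * (Cmod (Cminus X X') * Cmod Y') <= (INR p * rho ^ p * delta) * rho ^ q).
  { replace (rho * (Cmod (Cminus X X') * Cmod Y')) with ((rho * Cmod (Cminus X X')) * Cmod Y') by ring.
    apply Rmult_le_compat; auto. apply Rmult_le_pos; auto. }
  nra.
Qed.

Lemma pow_facts (x y : C) rho delta a : 0 <= rho -> Cmod x <= rho -> Cmod y <= rho ->
  Cmod (Cminus x y) <= delta ->
  Cmod (Cpow x a) <= rho ^ a /\ Cmod (Cpow y a) <= rho ^ a /\
  rho * Cmod (Cminus (Cpow x a) (Cpow y a)) <= INR a * rho ^ a * delta.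
Proof. intros. rewrite !Cmod_pow. split; [|split]. apply pow_incr; split; auto; apply Cmod_ge_0.
  apply pow_incr; split; auto; apply Cmod_ge_0. apply pow_lip; auto. Qed.

Lemma mono4_lip a b c d x1 x2 x3 x4 y1 y2 y3 y4 rho delta : 0 <= rho ->
  Cmod x1 <= rho -> Cmod x2 <= rho -> Cmod x3 <= rho -> Cmod x4 <= rho ->
  Cmod y1 <= rho -> Cmod y2 <= rho -> Cmod y3 <= rho -> Cmod y4 <= rho ->
  Cmod (Cminus x1 y1) <= delta -> Cmod (Cminus x2 y2) <= delta ->
  Cmod (Cminus x3 y3) <= delta -> Cmod (Cminus x4 y4) <= delta ->
  rho * Cmod (Cminus (mono4 a b c d x1 x2 x3 x4) (mono4 a b c d y1 y2 y3 y4))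
   <= INR (a + b + c + d) * rho ^ (a + b + c + d) * delta.
Proof.
  intros Hr H1 H2 H3 H4 H5 H6 H7 H8 D1 D2 D3 D4.
  assert (Hd : 0 <= delta) by (pose proof (Cmod_ge_0 (Cminus x1 y1)); lra).
  destruct (pow_facts x1 y1 rho delta a) as [A1 [A2 A3]]; auto.
  destruct (pow_facts x2 y2 rho delta b) as [B1 [B2 B3]]; auto.
  destruct (pow_facts x3 y3 rho delta c) as [C1 [C2 C3]]; auto.
  destruct (pow_facts x4 y4 rho delta d) as [E1 [E2 E3]]; auto.
  destruct (prod_lip _ _ _ _ rho delta a b Hr Hd A1 A2 A3 B1 B2 B3) as [P1 [P2 P3]].
  destruct (prod_lip _ _ _ _ rho delta (a+b) c Hr Hd P1 P2 P3 C1 C2 C3) as [Q1 [Q2 Q3]].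
  destruct (prod_lip _ _ _ _ rho delta (a+b+c) d Hr Hd Q1 Q2 Q3 E1 E2 E3) as [S1 [S2 S3]].
  exact S3.
Qed.

Lemma INR_le_pow2 n : INR n <= 2 ^ n.
Proof. induction n. simpl; lra. rewrite S_INR. simpl. assert (1 <= 2 ^ n) by (apply pow_R1_Rle; lra). lra. Qed.

Lemma pow_le1 t n : 0 <= t <= 1 -> t ^ n <= 1.
Proof. intros H; induction n; simpl. lra. assert (0 <= t ^ n) by (apply pow_le; lra). nra. Qed.
Lemma pow_decr t k n : 0 <= t <= 1 -> (k <= n)%nat -> t ^ n <= t ^ k.
Proof. intros H L. replace n with (k + (n - k))%nat by lia. rewrite pow_add.
  assert (0 <= t ^ k) by (apply pow_le; lra). pose proof (pow_le1 t (n - k) H).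
  assert (0 <= t ^ (n - k)) by (apply pow_le; lra). nra. Qed.

Definition cbound (s : ps4) r B := forall N, rsum4 (fun a b c d => Cmod (s a b c d) * r ^ (a + b + c + d)) N <= B.

Lemma RtoC_mult_re (c : R) (X : C) : Re (Cmult (RtoC c) X) = c * Re X.
Proof. destruct X; unfold Cmult, RtoC; simpl; ring. Qed.
Lemma RtoC_mult_im (c : R) (X : C) : Im (Cmult (RtoC c) X) = c * Im X.
Proof. destruct X; unfold Cmult, RtoC; simpl; ring. Qed.

Lemma psum4_scal mu s (t : R) x1 x2 x3 x4 N : ps4_whom mu s ->
  psum4 s (Cmult (RtoC t) x1) x2 (Cmult (RtoC t) x3) x4 N = Cmult (RtoC (t ^ mu)) (psum4 s x1 x2 x3 x4 N).
Proof.
  intros Hw. unfold psum4. rewrite <- csum_scal. apply csum_ext; intros.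
  rewrite <- csum_scal. apply csum_ext; intros.
  rewrite <- csum_scal. apply csum_ext; intros.
  rewrite <- csum_scal. apply csum_ext; intros.
  rewrite mono4_scal. destruct (Nat.eq_dec (k + k1) mu) as [E|E].
  - rewrite E. Cring.
  - rewrite (Hw _ _ _ _ E). Cring.
Qed.

Lemma ps4_sum_scal mu s (t : R) x1 x2 x3 x4 : ps4_whom mu s ->
  ps4_sum s (Cmult (RtoC t) x1) x2 (Cmult (RtoC t) x3) x4 = Cmult (RtoC (t ^ mu)) (ps4_sum s x1 x2 x3 x4).
Proof.
  intros Hw. unfold ps4_sum.
  rewrite (Lim_seq_ext _ (fun N => t ^ mu * Re (psum4 s x1 x2 x3 x4 N))).
  rewrite (Lim_seq_ext (fun N => Im _) (fun N => t ^ mu * Im (psum4 s x1 x2 x3 x4 N))).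
  rewrite !lim_scal. unfold Cmult, RtoC; simpl. f_equal; ring.
  intros; rewrite (psum4_scal mu) by auto; apply RtoC_mult_im.
  intros; rewrite (psum4_scal mu) by auto; apply RtoC_mult_re.
Qed.

Lemma conj_scal (t : R) z : Cconj (Cmult (RtoC t) z) = Cmult (RtoC t) (Cconj z).
Proof. destruct z; unfold Cconj, Cmult, RtoC; simpl; f_equal; ring. Qed.

Lemma ev4_scal mu s (t : R) z zeta : ps4_whom mu s ->
  ev4 s (Cmult (RtoC t) z) zeta = Cmult (RtoC (t ^ mu)) (ev4 s z zeta).
Proof. intros. unfold ev4. rewrite conj_scal. apply ps4_sum_scal; auto. Qed.

Lemma ev2_scal k s (t : R) z zeta : ps2_whom k s ->
  ev2 s (Cmult (RtoC t) z) zeta = Cmult (RtoC (t ^ k)) (ev2 s z zeta).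
Proof.
  intros Hw.
  assert (E : forall N, psum2 s (Cmult (RtoC t) z) zeta N = Cmult (RtoC (t ^ k)) (psum2 s z zeta N)).
  { intros. unfold psum2. rewrite <- csum_scal. apply csum_ext; intros.
    rewrite <- csum_scal. apply csum_ext; intros.
    rewrite Cpow_mult, RtoC_pow. destruct (Nat.eq_dec k0 k) as [e|e].
    - subst. Cring.
    - rewrite (Hw _ _ e). Cring. }
  unfold ev2.
  rewrite (Lim_seq_ext _ (fun N => t ^ k * Re (psum2 s z zeta N))).
  rewrite (Lim_seq_ext (fun N => Im _) (fun N => t ^ k * Im (psum2 s z zeta N))).
  rewrite !lim_scal. unfold Cmult, RtoC; simpl. f_equal; ring.
  intros; rewrite E; apply RtoC_mult_im.
  intros; rewrite E; apply RtoC_mult_re.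
Qed.

Lemma term_bound (s : ps4) a b c d x1 x2 x3 x4 r t k :
  0 < r -> 0 <= t <= 1 -> ps4_O k s ->
  Cmod x1 <= t * r -> Cmod x3 <= t * r -> Cmod x2 <= r -> Cmod x4 <= r ->
  Cmod (Cmult (s a b c d) (mono4 a b c d x1 x2 x3 x4)) <= t ^ k * (Cmod (s a b c d) * r ^ (a + b + c + d)).
Proof.
  intros Hr Ht HO H1 H3 H2 H4.
  destruct (Compare_dec.le_lt_dec k (a + c)) as [L|L].
  2:{ rewrite (HO _ _ _ _ L). rewrite Cmult_0_l. rewrite Cmod_R, Rabs_R0.
      assert (0 <= t ^ k) by (apply pow_le; lra). lra. }
  rewrite Cmod_mult, Cmod_mono4.
  assert (Hm : Cmod x1 ^ a * Cmod x2 ^ b * Cmod x3 ^ c * Cmod x4 ^ d <= t ^ k * r ^ (a + b + c + d)).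
  { eapply Rle_trans.
    apply Rmult_le_compat; try apply pow_le; try apply Cmod_ge_0.
    repeat apply Rmult_le_pos; apply pow_le; apply Cmod_ge_0.
    apply Rmult_le_compat; try apply pow_le; try apply Cmod_ge_0.
    repeat apply Rmult_le_pos; apply pow_le; apply Cmod_ge_0.
    apply Rmult_le_compat; try apply pow_le; try apply Cmod_ge_0.
    apply pow_incr; split; [apply Cmod_ge_0| exact H1].
    apply pow_incr; split; [apply Cmod_ge_0| exact H2].
    apply pow_incr; split; [apply Cmod_ge_0| exact H3].
    apply pow_incr; split; [apply Cmod_ge_0| exact H4].
    rewrite !Rpow_mult_distr, !pow_add.
    assert (t ^ (a + c) <= t ^ k) by (apply pow_decr; auto).
    rewrite pow_add in H.
    assert (0 <= r ^ a) by (apply pow_le; lra). assert (0 <= r ^ b) by (apply pow_le; lra).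
    assert (0 <= r ^ c) by (apply pow_le; lra). assert (0 <= r ^ d) by (apply pow_le; lra).
    assert (0 <= r ^ a * r ^ b * r ^ c * r ^ d) by (repeat apply Rmult_le_pos; auto).
    replace (t ^ a * r ^ a * r ^ b * (t ^ c * r ^ c) * r ^ d) with (t ^ a * t ^ c * (r ^ a * r ^ b * r ^ c * r ^ d)) by ring.
    replace (t ^ k * (r ^ a * r ^ b * r ^ c * r ^ d)) with (t ^ k * (r ^ a * r ^ b * r ^ c * r ^ d)) by ring.
    apply Rmult_le_compat_r; auto. }
  pose proof (Cmod_ge_0 (s a b c d)).
  replace (t ^ k * (Cmod (s a b c d) * r ^ (a + b + c + d))) with (Cmod (s a b c d) * (t ^ k * r ^ (a + b + c + d))) by ring.
  apply Rmult_le_compat_l; auto.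
Qed.

Lemma im_le_Cmod c : Rabs (Im c) <= Cmod c.
Proof. eapply Rle_trans. 2: apply Rmax_Cmod. apply Rmax_r. Qed.

Lemma bnd4 s r B k t x1 x2 x3 x4 : 0 < r -> 0 <= t <= 1 -> cbound s r B -> ps4_O k s ->
  Cmod x1 <= t * r -> Cmod x3 <= t * r -> Cmod x2 <= r -> Cmod x4 <= r ->
  Rabs (Re (ps4_sum s x1 x2 x3 x4)) <= t ^ k * B /\ Rabs (Im (ps4_sum s x1 x2 x3 x4)) <= t ^ k * B.
Proof.
  intros Hr Ht HB HO H1 H3 H2 H4. assert (0 <= t ^ k) by (apply pow_le; lra).
  split.
  - change (Re (ps4_sum s x1 x2 x3 x4)) with (real (Lim_seq (fun N => Re (psum4 s x1 x2 x3 x4 N)))).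
    apply lim_bound; intros N. rewrite Re_psum4. eapply Rle_trans. apply rsum4_abs.
    eapply Rle_trans. apply rsum4_le. intros. eapply Rle_trans. apply re_le_Cmod.
    apply (term_bound s a b c d x1 x2 x3 x4 r t k); auto.
    rewrite rsum4_scal. apply Rmult_le_compat_l; auto.
  - change (Im (ps4_sum s x1 x2 x3 x4)) with (real (Lim_seq (fun N => Im (psum4 s x1 x2 x3 x4 N)))).
    apply lim_bound; intros N. rewrite Im_psum4. eapply Rle_trans. apply rsum4_abs.
    eapply Rle_trans. apply rsum4_le. intros. eapply Rle_trans. apply im_le_Cmod.
    apply (term_bound s a b c d x1 x2 x3 x4 r t k); auto.
    rewrite rsum4_scal. apply Rmult_le_compat_l; auto.
Qed.

Lemma ps4_conv_re s r B x1 x2 x3 x4 : 0 < r -> cbound s r B ->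
  Cmod x1 <= r -> Cmod x2 <= r -> Cmod x3 <= r -> Cmod x4 <= r ->
  ex_finite_lim_seq (fun N => Re (psum4 s x1 x2 x3 x4 N)).
Proof.
  intros Hr HB H1 H2 H3 H4.
  cut (ex_finite_lim_seq (fun N => rsum4 (fun a b c d => Re (Cmult (s a b c d) (mono4 a b c d x1 x2 x3 x4))) N)).
  { intros [l Hl]. exists l. eapply is_lim_seq_ext. 2: exact Hl. intros; symmetry; apply Re_psum4. }
  apply (conv4 _ (fun a b c d => Cmod (s a b c d) * r ^ (a + b + c + d)) B); auto.
  intros. eapply Rle_trans. apply re_le_Cmod.
  eapply Rle_trans. apply (term_bound s a b c d x1 x2 x3 x4 r 1 0); auto; try lra.
  all: try (intros ? ? ? ? L; lia). all: try lra.
Qed.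

Lemma lip4 s r B x1 x2 x3 x4 y1 y2 y3 y4 delta : 0 < r -> cbound s r B ->
  Cmod x1 <= r/2 -> Cmod x2 <= r/2 -> Cmod x3 <= r/2 -> Cmod x4 <= r/2 ->
  Cmod y1 <= r/2 -> Cmod y2 <= r/2 -> Cmod y3 <= r/2 -> Cmod y4 <= r/2 ->
  Cmod (Cminus x1 y1) <= delta -> Cmod (Cminus x2 y2) <= delta ->
  Cmod (Cminus x3 y3) <= delta -> Cmod (Cminus x4 y4) <= delta ->
  Rabs (Re (ps4_sum s x1 x2 x3 x4) - Re (ps4_sum s y1 y2 y3 y4)) <= 2 / r * B * delta.
Proof.
  intros Hr HB H1 H2 H3 H4 H5 H6 H7 H8 D1 D2 D3 D4.
  assert (Hd : 0 <= delta) by (pose proof (Cmod_ge_0 (Cminus x1 y1)); lra).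
  change (Re (ps4_sum s x1 x2 x3 x4)) with (real (Lim_seq (fun N => Re (psum4 s x1 x2 x3 x4 N)))).
  change (Re (ps4_sum s y1 y2 y3 y4)) with (real (Lim_seq (fun N => Re (psum4 s y1 y2 y3 y4 N)))).
  rewrite lim_minus by (apply (ps4_conv_re s r B); auto; lra).
  apply lim_bound. intros N. rewrite !Re_psum4, <- rsum4_minus.
  eapply Rle_trans. apply rsum4_abs.
  eapply Rle_trans. 2:{ apply Rmult_le_compat_r. exact Hd. apply Rmult_le_compat_l.
     left; apply Rdiv_lt_0_compat; lra. apply (HB N). }
  replace (2 / r * rsum4 (fun a b c d : nat => Cmod (s a b c d) * r ^ (a + b + c + d)) N * delta)
    with (rsum4 (fun a b c d => delta * (2 / r * (Cmod (s a b c d) * r ^ (a + b + c + d)))) N)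
    by (rewrite !rsum4_scal; ring).
  apply rsum4_le. intros a b c d.
  replace (Re (Cmult (s a b c d) (mono4 a b c d x1 x2 x3 x4)) - Re (Cmult (s a b c d) (mono4 a b c d y1 y2 y3 y4)))
    with (Re (Cmult (s a b c d) (Cminus (mono4 a b c d x1 x2 x3 x4) (mono4 a b c d y1 y2 y3 y4)))).
  2:{ generalize (s a b c d) (mono4 a b c d x1 x2 x3 x4) (mono4 a b c d y1 y2 y3 y4).
      intros [p1 p2] [u1 u2] [v1 v2]. unfold Cminus, Cplus, Copp, Cmult; simpl; ring. }
  eapply Rle_trans. apply re_le_Cmod. rewrite Cmod_mult.
  set (n := (a + b + c + d)%nat).
  assert (L := mono4_lip a b c d x1 x2 x3 x4 y1 y2 y3 y4 (r/2) delta).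
  fold n in L.
  assert (L2 : r / 2 * Cmod (Cminus (mono4 a b c d x1 x2 x3 x4) (mono4 a b c d y1 y2 y3 y4)) <= INR n * (r / 2) ^ n * delta)
    by (apply L; auto; lra).
  assert (E : INR n * (r / 2) ^ n <= r ^ n).
  { unfold Rdiv. rewrite Rpow_mult_distr, pow_inv. pose proof (INR_le_pow2 n).
    assert (0 < 2 ^ n) by (apply pow_lt; lra). assert (0 <= r ^ n) by (apply pow_le; lra).
    replace (INR n * (r ^ n * / 2 ^ n)) with (r ^ n * (INR n / 2 ^ n)) by (field; lra).
    rewrite <- (Rmult_1_r (r ^ n)) at 2. apply Rmult_le_compat_l; auto.
    apply Rmult_le_reg_r with (2 ^ n); [lra|]. unfold Rdiv. rewrite Rmult_assoc, Rinv_l; lra. }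
  pose proof (Cmod_ge_0 (s a b c d)).
  assert (Cmod (Cminus (mono4 a b c d x1 x2 x3 x4) (mono4 a b c d y1 y2 y3 y4)) <= 2 / r * (r ^ n * delta)).
  { apply Rmult_le_reg_l with (r / 2). lra.
    replace (r / 2 * (2 / r * (r ^ n * delta))) with (r ^ n * delta) by (field; lra).
    eapply Rle_trans. apply L2. apply Rmult_le_compat_r; auto. }
  replace (delta * (2 / r * (Cmod (s a b c d) * r ^ n))) with (Cmod (s a b c d) * (2 / r * (r ^ n * delta))) by ring.
  apply Rmult_le_compat_l; auto.
Qed.

Lemma small_zero x t0 K : 0 < t0 -> (forall t, 0 < t <= t0 -> Rabs x <= K * t) -> x = 0.
Proof.
  intros Ht0 H. destruct (Req_dec x 0) as [e|ne]; auto. exfalso.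
  assert (Hx : 0 < Rabs x) by (apply Rabs_pos_lt; auto).
  assert (HK : 0 < K). { specialize (H t0 ltac:(lra)). destruct (Rle_or_lt K 0); auto. nra. }
  set (t := Rmin t0 (Rabs x / (2 * K))).
  assert (0 < Rabs x / (2 * K)) by (apply Rdiv_lt_0_compat; lra).
  assert (0 < t) by (unfold t; apply Rmin_pos; lra).
  assert (t <= Rabs x / (2 * K)) by apply Rmin_r.
  specialize (H t ltac:(split; [lra| apply Rmin_l])).
  assert (K * t <= K * (Rabs x / (2 * K))) by (apply Rmult_le_compat_l; lra).
  replace (K * (Rabs x / (2 * K))) with (Rabs x / 2) in H3 by (field; lra). lra.
Qed.

Lemma poly_zero n : forall p (c : nat -> R) t0 K, 0 < t0 ->
  (forall t, 0 < t <= t0 -> Rabs (rsum (fun k => c k * t ^ (k + p)) n) <= K * t ^ (n + p + 1)) ->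
  forall k, (k <= n)%nat -> c k = 0.
Proof.
  induction n; intros p c t0 K Ht0 H.
  - intros k Hk. replace k with O by lia.
    apply (small_zero _ (Rmin t0 1) K). apply Rmin_pos; lra.
    intros t Ht. assert (t <= t0) by (eapply Rle_trans; [apply Ht| apply Rmin_l]).
    specialize (H t ltac:(lra)). simpl in H. rewrite Rabs_mult in H.
    assert (0 < t ^ p) by (apply pow_lt; lra).
    rewrite (Rabs_right (t ^ p)) in H by lra.
    replace (p + 1)%nat with (S p) in H by lia. simpl in H.
    apply Rmult_le_reg_r with (t ^ p); auto. lra.
  - assert (c0 : c O = 0).
    { set (A := rsum (fun k => Rabs (c (S k))) n).
      apply (small_zero _ (Rmin t0 1) (Rabs K + A)). apply Rmin_pos; lra.
      intros t Ht. assert (t <= t0) by (eapply Rle_trans; [apply Ht| apply Rmin_l]).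
      assert (t <= 1) by (eapply Rle_trans; [apply Ht| apply Rmin_r]).
      specialize (H t ltac:(lra)). rewrite rsum_shift in H. simpl in H.
      assert (0 < t ^ p) by (apply pow_lt; lra).
      assert (HS : Rabs (rsum (fun k => c (S k) * (t * t ^ (k + p))) n) <= t ^ (S p) * A).
      { eapply Rle_trans. apply rsum_abs. unfold A. rewrite <- rsum_scal. apply rsum_le. intros k.
        rewrite Rabs_mult, Rmult_comm. apply Rmult_le_compat_r. apply Rabs_pos.
        rewrite Rabs_right. 2:{ apply Rle_ge, Rmult_le_pos. lra. apply pow_le; lra. }
        change (t * t ^ (k + p)) with (t ^ (S (k + p))). apply pow_decr; [lra| lia]. }
      assert (HK : K * (t * t ^ (n + p + 1)) <= Rabs K * t ^ (S p)).
      { change (t * t ^ (n + p + 1)) with (t ^ (S (n + p + 1))).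
        eapply Rle_trans. apply Rle_abs. rewrite Rabs_mult. rewrite (Rabs_right (t ^ _)).
        2: apply Rle_ge, pow_le; lra. apply Rmult_le_compat_l. apply Rabs_pos. apply pow_decr; [lra|lia]. }
      assert (H4 : Rabs (c O * t ^ p) <= t ^ S p * (Rabs K + A)).
      { pose proof (Rabs_triang (c O * t ^ p + rsum (fun k => c (S k) * (t * t ^ (k + p))) n)
                               (- rsum (fun k => c (S k) * (t * t ^ (k + p))) n)) as H4.
        rewrite Rabs_Ropp in H4. replace (c O * t ^ p + rsum (fun k => c (S k) * (t * t ^ (k + p))) n +
         - rsum (fun k => c (S k) * (t * t ^ (k + p))) n) with (c O * t ^ p) in H4 by ring. lra. }
      clear H. rewrite Rabs_mult, (Rabs_right (t ^ p)) in H4 by lra. simpl in H4.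
      apply Rmult_le_reg_r with (t ^ p); auto. lra. }
    intros k Hk. destruct k. auto.
    apply (IHn (S p) (fun k => c (S k)) t0 K Ht0); [|lia].
    intros t Ht. specialize (H t Ht). rewrite rsum_shift, c0 in H.
    rewrite Rmult_0_l, Rplus_0_l in H.
    replace (n + S p + 1)%nat with (S n + p + 1)%nat by lia.
    erewrite rsum_ext. exact H. intros; simpl. replace (k0 + S p)%nat with (S (k0 + p)) by lia. reflexivity.
Qed.

Lemma conj_RtoC x : Cconj (RtoC x) = RtoC x.
Proof. unfold Cconj, RtoC; simpl; f_equal; ring. Qed.

Lemma RtoC_half : RtoC (/2) = Cinv (RtoC 2).
Proof. unfold Cinv, RtoC; simpl; f_equal; field. Qed.
Lemma RtoC2_nz : RtoC 2 <> RtoC 0.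
Proof. intros E; injection E; lra. Qed.

Lemma q_real w : Cminus (RtoC 1) (Cmult w (Cconj w)) = RtoC (1 - Cmod w ^ 2).
Proof. rewrite Cmod2_alt. destruct w as [x y]. unfold Cminus, Cplus, Copp, Cmult, Cconj, RtoC; simpl. f_equal; ring. Qed.

Lemma q_nz w : Cmod w < 1 -> Cminus (RtoC 1) (Cmult w (Cconj w)) <> RtoC 0.
Proof. intros H. rewrite q_real. intros E. injection E. intros.
  assert (Cmod w ^ 2 < 1). { pose proof (Cmod_ge_0 w). simpl. nra. } lra. Qed.

Lemma mfun_scal (t : R) u w : Cmod w < 1 ->
  mfun (Cmult (RtoC t) u) w = Cmult (RtoC (t ^ 2)) (mfun u w).
Proof.
  intros H. pose proof (q_nz w H). unfold mfun. rewrite conj_scal.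
  replace (RtoC (t ^ 2)) with (Cmult (RtoC t) (RtoC t)) by (unfold RtoC, Cmult; simpl; f_equal; ring).
  simpl Cpow. field. auto.
Qed.

Section M.
Variables (z w a b : C).
Let zb := Cconj z. Let wb := Cconj w. Let ab := Cconj a. Let bb := Cconj b.
Definition q0 := Cminus (RtoC 1) (Cmult w wb).
Definition m0 := mfun z w.
Definition N1 := Cplus (Cplus (Cplus (Cmult a zb) (Cmult z ab))
   (Cmult (RtoC (/2)) (Cplus (Cmult (RtoC 2) (Cmult (Cmult z a) wb)) (Cmult (Cmult z z) bb))))
   (Cmult (RtoC (/2)) (Cplus (Cmult (RtoC 2) (Cmult (Cmult zb ab) w)) (Cmult (Cmult zb zb) b))).
Definition q1 := Copp (Cplus (Cmult b wb) (Cmult w bb)).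
Definition Lx := Cdiv (Cminus N1 (Cmult q1 m0)) q0.
Definition N2 := Cplus (Cplus (Cmult a ab)
   (Cmult (RtoC (/2)) (Cplus (Cmult (Cmult a a) wb) (Cmult (RtoC 2) (Cmult (Cmult z a) bb)))))
   (Cmult (RtoC (/2)) (Cplus (Cmult (Cmult ab ab) w) (Cmult (RtoC 2) (Cmult (Cmult zb ab) b)))).
Definition N3 := Cplus (Cmult (RtoC (/2)) (Cmult (Cmult a a) bb)) (Cmult (RtoC (/2)) (Cmult (Cmult ab ab) b)).
Definition q2 := Copp (Cmult b bb).
Definition Ac := Cminus (Cminus N2 (Cmult q1 Lx)) (Cmult q2 m0).
Definition Bc := Cminus N3 (Cmult q2 Lx).
End M.

Lemma mfun_taylor z w a b (e : R) :
  Cmod w < 1 -> Cmod (Cplus w (Cmult (RtoC e) b)) < 1 ->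
  mfun (Cplus z (Cmult (RtoC e) a)) (Cplus w (Cmult (RtoC e) b)) =
  Cplus (Cplus (m0 z w) (Cmult (RtoC e) (Lx z w a b)))
        (Cmult (RtoC (e ^ 2)) (Cdiv (Cplus (Ac z w a b) (Cmult (RtoC e) (Bc z w a b)))
                                   (Cminus (RtoC 1) (Cmult (Cplus w (Cmult (RtoC e) b)) (Cconj (Cplus w (Cmult (RtoC e) b))))))).
Proof.
  intros H1 H2. pose proof (q_nz w H1). pose proof (q_nz _ H2).
  revert H0. rewrite !Cplus_conj, !conj_scal. intros H0.
  unfold Ac, Bc, Lx, N1, N2, N3, q0, q1, q2, m0, mfun in *.
  rewrite RtoC_half.
  replace (RtoC (e ^ 2)) with (Cmult (RtoC e) (RtoC e)) by (unfold RtoC, Cmult; simpl; f_equal; ring).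
  simpl Cpow. rewrite !Cplus_conj, !conj_scal.
  match goal with |- ?x = ?y => change (@eq C x y) end.
  field. repeat split; auto using RtoC2_nz.
Qed.

Lemma Cmult_nz x y : x <> RtoC 0 -> y <> RtoC 0 -> Cmult x y <> RtoC 0.
Proof. intros Hx Hy E. apply Cmod_gt_0 in Hx. apply Cmod_gt_0 in Hy.
  assert (Cmod (Cmult x y) = 0) by (rewrite E; apply Cmod_0). rewrite Cmod_mult in H. nra. Qed.

Lemma corr_twoRe z w a b c : Cmod w < 1 ->
  let q := Cminus (RtoC 1) (Cmult w (Cconj w)) in
  let l := Cplus (Cconj z) (Cmult z (Cconj w)) in
  twoRe (Cminus (Cplus (Cmult (Cdiv l q) a)
                (Cmult (Cdiv (Cpow l 2) (Cmult (RtoC 2) (Cpow q 2))) b))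
         (Cmult (RtoC (/2)) c)) = Cminus (Lx z w a b) (RtoC (Re c)).
Proof.
  intros Hw q l. pose proof (q_nz w Hw) as Hq. fold q in Hq.
  assert (Hq2 : Cmult (RtoC 2) (Cpow q 2) <> RtoC 0).
  { apply Cmult_nz. apply RtoC2_nz. simpl. apply Cmult_nz; auto. apply Cmult_nz; auto.
    intros E; injection E; lra. }
  unfold twoRe. rewrite re_alt.
  rewrite !Cminus_conj, !Cplus_conj, !Cmult_conj, !Cdiv_conj by auto.
  rewrite !Cmult_conj, !Cpow_conj, !conj_RtoC.
  unfold l, q. rewrite !Cminus_conj, !Cplus_conj, !Cmult_conj, !Cconj_conj, !conj_RtoC.
  unfold Lx, N1, q0, q1, m0, mfun. unfold q in Hq, Hq2.
  rewrite RtoC_half. simpl Cpow.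
  match goal with |- ?x = ?y => change (@eq C x y) end.
  field. repeat split; auto using RtoC2_nz.
Qed.

Lemma cbound_mono s r r' B B' : 0 <= r' <= r -> B <= B' -> cbound s r B -> cbound s r' B'.
Proof. intros Hr HB H N. eapply Rle_trans. 2: eapply Rle_trans; [apply (H N)| exact HB].
  apply rsum4_le; intros. apply Rmult_le_compat_l. apply Cmod_ge_0. apply pow_incr; lra. Qed.

Lemma common (Sf : nat -> ps4) n :
  (forall mu, (3 <= mu <= n)%nat -> ps4_convergent (Sf mu)) ->
  exists r B, 0 < r /\ forall mu, (3 <= mu <= n)%nat -> cbound (Sf mu) r B.
Proof.
  induction n; intros H.
  - exists 1, 0. split. lra. intros; lia.
  - destruct IHn as [r1 [B1 [Hr1 H1]]]. intros; apply H; lia.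
    destruct (Compare_dec.le_lt_dec 3 (S n)) as [L|L].
    + destruct (H (S n) ltac:(lia)) as [r2 [Hr2 [B2 H2]]].
      exists (Rmin r1 r2), (Rmax B1 B2). split. apply Rmin_pos; auto.
      intros mu Hmu. destruct (Nat.eq_dec mu (S n)) as [e|e].
      * subst. apply (cbound_mono _ r2 _ B2). split. left; apply Rmin_pos; auto. apply Rmin_r.
        apply Rmax_r. exact H2.
      * apply (cbound_mono _ r1 _ B1). split. left; apply Rmin_pos; auto. apply Rmin_l.
        apply Rmax_l. apply H1; lia.
    + exists r1, B1. split; auto. intros; lia.
Qed.

Lemma Fdef_scaled nu G Rm (t : R) z w :
  (forall k, (k <= nu - 3)%nat -> ps4_whom (3 + k) (G (3 + k)%nat)) -> Cmod w < 1 ->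
  Re (Fdef nu G Rm (Cmult (RtoC t) z) w) =
    t ^ 2 * Re (mfun z w) + rsum (fun k => Re (ev4 (G (3 + k)%nat) z w) * t ^ (k + 3)) (nu - 3)
    + Re (ev4 Rm (Cmult (RtoC t) z) w) /\
  Im (Fdef nu G Rm (Cmult (RtoC t) z) w) =
    t ^ 2 * Im (mfun z w) + rsum (fun k => Im (ev4 (G (3 + k)%nat) z w) * t ^ (k + 3)) (nu - 3)
    + Im (ev4 Rm (Cmult (RtoC t) z) w).
Proof.
  intros Hw Hw1. unfold Fdef. rewrite mfun_scal by auto.
  split.
  - change (Re (Cplus ?x ?y)) with (Re x + Re y). change (Re (Cplus ?x ?y)) with (Re x + Re y).
    rewrite RtoC_mult_re, Re_csum. f_equal. f_equal. apply rsum_ext; intros.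
    rewrite (ev4_scal (3 + k)) by (apply Hw; auto). rewrite RtoC_mult_re, Nat.add_comm. ring.
  - change (Im (Cplus ?x ?y)) with (Im x + Im y). change (Im (Cplus ?x ?y)) with (Im x + Im y).
    rewrite RtoC_mult_im, Im_csum. f_equal. f_equal. apply rsum_ext; intros.
    rewrite (ev4_scal (3 + k)) by (apply Hw; auto). rewrite RtoC_mult_im, Nat.add_comm. ring.
Qed.

Lemma rsum_delta (a : nat -> R) X t n p :
  rsum (fun k => (a k + (if Nat.eq_dec k n then X else 0)) * t ^ (k + p)) n =
  rsum (fun k => a k * t ^ (k + p)) n + X * t ^ (n + p).
Proof.
  destruct n.
  - simpl. ring.
  - simpl rsum. rewrite (rsum_ext _ (fun k => a k * t ^ (k + p))).
    destruct (Nat.eq_dec n n); [|lia]. simpl. ring.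
    intros k Hk. destruct (Nat.eq_dec k (S n)); [lia|]. ring.
Qed.

Lemma Im_twoRe X : Im (twoRe X) = 0.
Proof. destruct X; unfold twoRe, Cplus, Cconj; simpl; ring. Qed.
Lemma Re_twoRe X : Re (twoRe X) = 2 * Re X.
Proof. destruct X; unfold twoRe, Cplus, Cconj; simpl; ring. Qed.

Lemma Cmod_scal (t : R) z : 0 <= t -> Cmod (Cmult (RtoC t) z) = t * Cmod z.
Proof. intros. rewrite Cmod_mult, Cmod_R, Rabs_right; lra. Qed.

Lemma rsum_le_in u v N : (forall k, (k <= N)%nat -> u k <= v k) -> rsum u N <= rsum v N.
Proof. induction N; intros H; simpl. apply H; lia. assert (rsum u N <= rsum v N) by (apply IHN; intros; apply H; lia).
  specialize (H (S N) (le_n _)). lra. Qed.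

Lemma rsum_const c n : rsum (fun _ => c) n = INR (S n) * c.
Proof. induction n. simpl; ring. simpl rsum. rewrite IHn. rewrite (S_INR (S n)). ring. Qed.

Lemma im_part nu G Rm r B z w :
  (3 <= nu)%nat -> (forall k, (k <= nu - 3)%nat -> ps4_whom (3 + k) (G (3 + k)%nat)) ->
  0 < r <= 1 -> cbound Rm r B -> ps4_O (nu + 1) Rm -> Cmod z <= r -> Cmod w <= r -> Cmod w < 1 ->
  (forall t, 0 < t <= 1 -> Im (Fdef nu G Rm (Cmult (RtoC t) z) w) = 0) ->
  forall k, (k <= nu - 3)%nat -> Im (ev4 (G (3 + k)%nat) z w) = 0.
Proof.
  intros Hnu Hwh Hr HB HO Hz Hw Hw1 Him k Hk.
  set (c := fun k => match k with O => Im (mfun z w) | S k' => Im (ev4 (G (3 + k')%nat) z w) end).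
  change (Im (ev4 (G (3 + k)%nat) z w)) with (c (S k)).
  apply (poly_zero (nu - 2) 2 c 1 B); [lra| |lia].
  intros t Ht. specialize (Him t Ht).
  destruct (Fdef_scaled nu G Rm t z w Hwh Hw1) as [_ E]. rewrite E in Him.
  replace (nu - 2)%nat with (S (nu - 3)) by lia. rewrite rsum_shift.
  replace (S (nu - 3) + 2 + 1)%nat with (nu + 1)%nat by lia.
  replace (c 0%nat * t ^ (0 + 2) + rsum (fun k0 => c (S k0) * t ^ (S k0 + 2)) (nu - 3))
    with (- Im (ev4 Rm (Cmult (RtoC t) z) w)).
  2:{ rewrite (rsum_ext (fun k0 => c (S k0) * t ^ (S k0 + 2)) (fun k => Im (ev4 (G (3 + k)%nat) z w) * t ^ (k + 3))).
      change (c 0%nat) with (Im (mfun z w)). simpl (0 + 2)%nat. lra.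
      intros k0 _. change (c (S k0)) with (Im (ev4 (G (3 + k0)%nat) z w)). f_equal; f_equal; lia. }
  rewrite Rabs_Ropp. rewrite Rmult_comm.
  unfold ev4. apply (bnd4 Rm r B (nu + 1) t); auto; try lra.
  rewrite Cmod_scal; try lra. apply Rmult_le_compat_l; lra.
  rewrite conj_scal, Cmod_scal, Cmod_conj; try lra. apply Rmult_le_compat_l; lra.
  rewrite Cmod_conj; auto.
Qed.

Lemma E_bound z w a b (e : R) : 0 <= e <= 1 -> Cmod (Cplus w (Cmult (RtoC e) b)) <= 1/2 ->
  Rabs (Re (Cdiv (Cplus (Ac z w a b) (Cmult (RtoC e) (Bc z w a b)))
     (Cminus (RtoC 1) (Cmult (Cplus w (Cmult (RtoC e) b)) (Cconj (Cplus w (Cmult (RtoC e) b)))))))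
  <= 2 * (Cmod (Ac z w a b) + Cmod (Bc z w a b)).
Proof.
  intros He Hw. set (w' := Cplus w (Cmult (RtoC e) b)) in *.
  assert (Hq : Cmod w' < 1) by lra.
  eapply Rle_trans. apply re_le_Cmod. rewrite Cmod_div by (apply q_nz; auto).
  rewrite q_real, Cmod_R.
  pose proof (Cmod_ge_0 w'). assert (Cmod w' ^ 2 <= 1/4) by (simpl; nra).
  rewrite Rabs_right by lra.
  assert (Cmod (Cplus (Ac z w a b) (Cmult (RtoC e) (Bc z w a b))) <= Cmod (Ac z w a b) + Cmod (Bc z w a b)).
  { eapply Rle_trans. apply Cmod_triangle. rewrite Cmod_scal by lra.
    pose proof (Cmod_ge_0 (Bc z w a b)). nra. }
  pose proof (Cmod_ge_0 (Cplus (Ac z w a b) (Cmult (RtoC e) (Bc z w a b)))).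
  apply Rmult_le_reg_r with (1 - Cmod w' ^ 2). lra.
  unfold Rdiv. rewrite Rmult_assoc, Rinv_l by lra. nra.
Qed.

Lemma re_part nu G G' Rm Rm' r BR BR' BG' z w f0 g0 h0 t0 :
  (3 <= nu)%nat ->
  (forall k, (k <= nu - 3)%nat -> ps4_whom (3 + k) (G (3 + k)%nat)) ->
  (forall k, (k <= nu - 3)%nat -> ps4_whom (3 + k) (G' (3 + k)%nat)) ->
  0 < r <= 1 -> cbound Rm r BR -> ps4_O (nu + 1) Rm -> cbound Rm' r BR' -> ps4_O (nu + 1) Rm' ->
  (forall k, (k <= nu - 3)%nat -> cbound (G' (3 + k)%nat) r BG') ->
  Cmod z <= r / 4 -> Cmod w <= r / 4 -> 0 < t0 <= 1 -> t0 * (Cmod f0 + Cmod g0) <= r / 4 ->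
  (forall t, 0 < t <= t0 ->
     Re (Fdef nu G Rm (Cmult (RtoC t) z) w) + t ^ nu * Re h0 =
     Re (Fdef nu G' Rm' (Cmult (RtoC t) (Cplus z (Cmult (RtoC (t ^ (nu - 2))) f0)))
                        (Cplus w (Cmult (RtoC (t ^ (nu - 2))) g0)))) ->
  forall k, (k <= nu - 3)%nat ->
    Re (ev4 (G' (3 + k)%nat) z w) - Re (ev4 (G (3 + k)%nat) z w) +
    (if Nat.eq_dec k (nu - 3) then Re (Lx z w f0 g0) - Re h0 else 0) = 0.
Proof.
  intros Hnu HwG HwG' Hr HBR HOR HBR' HOR' HBG Hz Hw Ht0 Hf Heq.
  set (AA := Cmod (Ac z w f0 g0) + Cmod (Bc z w f0 g0)).
  set (CL := 2 / r * BG' * (Cmod f0 + Cmod g0)).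
  set (K := BR + BR' + 2 * AA + INR (S (nu - 3)) * CL).
  apply (poly_zero (nu - 3) 3 _ t0 K); [lra|].
  intros t Ht. specialize (Heq t Ht).
  set (e := t ^ (nu - 2)) in *.
  assert (He : 0 < e <= t).
  { split. apply pow_lt; lra. unfold e. rewrite <- (pow_1 t) at 2. apply pow_decr; [lra|lia]. }
  pose proof (Cmod_ge_0 f0). pose proof (Cmod_ge_0 g0). pose proof (Cmod_ge_0 z). pose proof (Cmod_ge_0 w).
  assert (Hef : e * Cmod f0 <= r / 4).
  { eapply Rle_trans. 2: exact Hf. assert (e <= t0) by lra. nra. }
  assert (Heg : e * Cmod g0 <= r / 4).
  { eapply Rle_trans. 2: exact Hf. assert (e <= t0) by lra. nra. }
  assert (Hu : Cmod (Cplus z (Cmult (RtoC e) f0)) <= r / 2).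
  { eapply Rle_trans. apply Cmod_triangle. rewrite Cmod_scal by lra. lra. }
  assert (Hw' : Cmod (Cplus w (Cmult (RtoC e) g0)) <= r / 2).
  { eapply Rle_trans. apply Cmod_triangle. rewrite Cmod_scal by lra. lra. }
  assert (Hw1 : Cmod w < 1) by lra.
  assert (Hw'1 : Cmod (Cplus w (Cmult (RtoC e) g0)) < 1) by lra.
  destruct (Fdef_scaled nu G Rm t z w HwG Hw1) as [E1 _].
  destruct (Fdef_scaled nu G' Rm' t (Cplus z (Cmult (RtoC e) f0)) _ HwG' Hw'1) as [E2 _].
  rewrite E1, E2 in Heq. clear E1 E2.
  rewrite (mfun_taylor z w f0 g0 e Hw1 Hw'1) in Heq.
  set (EE := Cdiv (Cplus (Ac z w f0 g0) (Cmult (RtoC e) (Bc z w f0 g0)))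
      (Cminus (RtoC 1) (Cmult (Cplus w (Cmult (RtoC e) g0)) (Cconj (Cplus w (Cmult (RtoC e) g0)))))) in *.
  assert (HEE : Rabs (Re EE) <= 2 * AA) by (apply E_bound; lra).
  change (Re (Cplus ?x ?y)) with (Re x + Re y) in Heq.
  change (Re (Cplus ?x ?y)) with (Re x + Re y) in Heq.
  rewrite !RtoC_mult_re in Heq. unfold m0 in Heq.
  set (R1 := Re (ev4 Rm (Cmult (RtoC t) z) w)) in *.
  set (R2 := Re (ev4 Rm' (Cmult (RtoC t) (Cplus z (Cmult (RtoC e) f0))) (Cplus w (Cmult (RtoC e) g0)))) in *.
  assert (HR1 : Rabs R1 <= t ^ (nu + 1) * BR).
  { unfold R1, ev4. apply (bnd4 Rm r BR (nu + 1) t); auto; try lra.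
    rewrite Cmod_scal; try lra. apply Rmult_le_compat_l; lra.
    rewrite conj_scal, Cmod_scal, Cmod_conj; try lra. apply Rmult_le_compat_l; lra.
    rewrite Cmod_conj; lra. }
  assert (HR2 : Rabs R2 <= t ^ (nu + 1) * BR').
  { unfold R2, ev4. apply (bnd4 Rm' r BR' (nu + 1) t); auto; try lra.
    rewrite Cmod_scal; try lra. apply Rmult_le_compat_l; lra.
    rewrite conj_scal, Cmod_scal, Cmod_conj; try lra. apply Rmult_le_compat_l; lra.
    rewrite Cmod_conj; lra. }
  set (S1 := rsum (fun k => Re (ev4 (G (3 + k)%nat) z w) * t ^ (k + 3)) (nu - 3)) in *.
  set (S2 := rsum (fun k => Re (ev4 (G' (3 + k)%nat) (Cplus z (Cmult (RtoC e) f0)) (Cplus w (Cmult (RtoC e) g0))) * t ^ (k + 3)) (nu - 3)) in *.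
  set (S0 := rsum (fun k => Re (ev4 (G' (3 + k)%nat) z w) * t ^ (k + 3)) (nu - 3)).
  assert (HD : Rabs (S2 - S0) <= t ^ (nu + 1) * (INR (S (nu - 3)) * CL)).
  { unfold S2, S0. rewrite <- rsum_minus. eapply Rle_trans. apply rsum_abs.
    replace (t ^ (nu + 1) * (INR (S (nu - 3)) * CL)) with (rsum (fun _ => t ^ (nu + 1) * CL) (nu - 3))
      by (rewrite rsum_const; ring).
    apply rsum_le_in. intros k Lk.
    rewrite <- Rmult_minus_distr_r, Rabs_mult, (Rabs_right (t ^ _)) by (apply Rle_ge, pow_le; lra).
    assert (HL : Rabs (Re (ev4 (G' (3 + k)%nat) (Cplus z (Cmult (RtoC e) f0)) (Cplus w (Cmult (RtoC e) g0))) -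
                       Re (ev4 (G' (3 + k)%nat) z w)) <= 2 / r * BG' * (e * (Cmod f0 + Cmod g0))).
    { unfold ev4. apply lip4; auto; try lra; try (apply HBG; auto).
      all: try rewrite Cmod_conj; try lra.
      all: try rewrite <- Cminus_conj; try rewrite Cmod_conj.
      all: replace (Cminus (Cplus z (Cmult (RtoC e) f0)) z) with (Cmult (RtoC e) f0) by Cring.
      all: replace (Cminus (Cplus w (Cmult (RtoC e) g0)) w) with (Cmult (RtoC e) g0) by Cring.
      all: rewrite Cmod_scal by lra; nra. }
    assert (Het : e * t ^ (k + 3) <= t ^ (nu + 1)).
    { unfold e. rewrite <- pow_add. apply pow_decr; [lra|lia]. }
    assert (HL' : Rabs (Re (ev4 (G' (3 + k)%nat) (Cplus z (Cmult (RtoC e) f0)) (Cplus w (Cmult (RtoC e) g0))) -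
                       Re (ev4 (G' (3 + k)%nat) z w)) <= CL * e).
    { unfold CL. replace (2 / r * BG' * (Cmod f0 + Cmod g0) * e) with (2 / r * BG' * (e * (Cmod f0 + Cmod g0))) by ring. exact HL. }
    assert (HCL : 0 <= CL).
    { pose proof (Rabs_pos (Re (ev4 (G' (3 + k)%nat) (Cplus z (Cmult (RtoC e) f0)) (Cplus w (Cmult (RtoC e) g0))) -
                       Re (ev4 (G' (3 + k)%nat) z w))). nra. }
    assert (0 <= t ^ (k + 3)) by (apply pow_le; lra).
    eapply Rle_trans. apply Rmult_le_compat_r. auto. exact HL'.
    replace (CL * e * t ^ (k + 3)) with (CL * (e * t ^ (k + 3))) by ring.
    rewrite (Rmult_comm (t ^ (nu + 1))). apply Rmult_le_compat_l; auto. }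
  rewrite (rsum_delta (fun k => Re (ev4 (G' (3 + k)%nat) z w) - Re (ev4 (G (3 + k)%nat) z w))).
  rewrite (rsum_ext _ (fun k => Re (ev4 (G' (3 + k)%nat) z w) * t ^ (k + 3) - Re (ev4 (G (3 + k)%nat) z w) * t ^ (k + 3)))
    by (intros; ring).
  rewrite rsum_minus. fold S0 S1.
  replace (nu - 3 + 3 + 1)%nat with (nu + 1)%nat by lia.
  replace (nu - 3 + 3)%nat with nu by lia.
  assert (Et2 : t ^ 2 * e = t ^ nu) by (unfold e; rewrite <- pow_add; f_equal; lia).
  assert (Et3 : t ^ 2 * e ^ 2 <= t ^ (nu + 1)).
  { unfold e. rewrite <- pow_mult, <- pow_add. apply pow_decr; [lra|lia]. }
  assert (HE2 : Rabs (t ^ 2 * e ^ 2 * Re EE) <= t ^ (nu + 1) * (2 * AA)).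
  { rewrite Rabs_mult, (Rabs_right (t ^ 2 * e ^ 2)).
    2:{ apply Rle_ge, Rmult_le_pos; apply pow_le; lra. }
    apply Rmult_le_compat; auto. apply Rmult_le_pos; apply pow_le; lra. apply Rabs_pos. }
  assert (Hid : S0 - S1 + (Re (Lx z w f0 g0) - Re h0) * t ^ nu =
                R1 - R2 - t ^ 2 * e ^ 2 * Re EE - (S2 - S0)).
  { rewrite <- Et2 in Heq |- *. lra. }
  rewrite Hid. unfold K.
  apply Rabs_le_between in HR1. apply Rabs_le_between in HR2.
  apply Rabs_le_between in HE2. apply Rabs_le_between in HD.
  apply Rabs_le_between. split; nra.
Qed.

Lemma Ceq (x y : C) : Re x = Re y -> Im x = Im y -> x = y.
Proof. destruct x, y; simpl; intros; subst; auto. Qed.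

Theorem proposition6p2 (nu : nat) (G G' : nat -> ps4) (Rm Rm' : ps4) (f g h : ps2) :
  (3 <= nu)%nat ->
  (forall mu, (3 <= mu <= nu)%nat ->
     ps4_convergent (G mu) /\ ps4_whom mu (G mu) /\
     ps4_convergent (G' mu) /\ ps4_whom mu (G' mu)) ->
  ps4_convergent Rm -> ps4_O (nu + 1) Rm ->
  ps4_convergent Rm' -> ps4_O (nu + 1) Rm' ->
  ps2_convergent f -> ps2_whom (nu - 1) f ->
  ps2_convergent g -> ps2_whom (nu - 2) g ->
  ps2_convergent h -> ps2_whom nu h ->
  (exists d, 0 < d /\ forall z zeta, Cmod z < d -> Cmod zeta < d ->
     Im (Fdef nu G Rm z zeta) = 0 /\ Im (Fdef nu G' Rm' z zeta) = 0) ->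
  (exists d, 0 < d /\ forall z zeta w, Cmod z < d -> Cmod zeta < d -> Cmod w < d ->
     Re w = Re (Fdef nu G Rm z zeta) ->
     Re (Cplus w (ev2 h z zeta)) =
     Re (Fdef nu G' Rm' (Cplus z (ev2 f z zeta)) (Cplus zeta (ev2 g z zeta)))) ->
  exists d, 0 < d /\ forall z zeta, Cmod z < d -> Cmod zeta < d ->
    (forall mu, (3 <= mu <= nu - 1)%nat -> ev4 (G' mu) z zeta = ev4 (G mu) z zeta) /\
    ev4 (G' nu) z zeta = Cminus (ev4 (G nu) z zeta) (twoRe (corr f g h z zeta)).
Proof.
  intros Hnu HG HRc HRO HR'c HR'O Hfc Hfw Hgc Hgw Hhc Hhw [d1 [Hd1 Hreal]] [d2 [Hd2 Hmap]].
  destruct (common G' nu) as [rG' [BG' [HrG' HBG']]]. { intros; apply HG; auto. }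
  destruct HRc as [rR [HrR [BR HBR]]]. destruct HR'c as [rR' [HrR' [BR' HBR']]].
  set (r := Rmin (Rmin rG' rR) (Rmin rR' 1)).
  assert (Hr : 0 < r) by (unfold r; repeat apply Rmin_pos; lra).
  assert (r1 : r <= rG') by (unfold r; eapply Rle_trans; [apply Rmin_l| apply Rmin_l]).
  assert (r2 : r <= rR) by (unfold r; eapply Rle_trans; [apply Rmin_l| apply Rmin_r]).
  assert (r3 : r <= rR') by (unfold r; eapply Rle_trans; [apply Rmin_r| apply Rmin_l]).
  assert (r4 : r <= 1) by (unfold r; eapply Rle_trans; [apply Rmin_r| apply Rmin_r]).
  assert (CG : forall k, (k <= nu - 3)%nat -> cbound (G' (3 + k)%nat) r BG').
  { intros. apply (cbound_mono _ rG' _ BG'); try lra. apply HBG'; lia. }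
  assert (CR : cbound Rm r BR) by (apply (cbound_mono _ rR _ BR); try lra; exact HBR).
  assert (CR' : cbound Rm' r BR') by (apply (cbound_mono _ rR' _ BR'); try lra; exact HBR').
  assert (HwG : forall k, (k <= nu - 3)%nat -> ps4_whom (3 + k) (G (3 + k)%nat)) by (intros; apply HG; lia).
  assert (HwG' : forall k, (k <= nu - 3)%nat -> ps4_whom (3 + k) (G' (3 + k)%nat)) by (intros; apply HG; lia).
  exists (Rmin (Rmin (r / 4) d1) d2). split. repeat apply Rmin_pos; lra.
  intros z w Hz Hw.
  assert (z1 : Cmod z < r / 4) by (eapply Rlt_le_trans; [apply Hz| eapply Rle_trans; [apply Rmin_l| apply Rmin_l]]).
  assert (z2 : Cmod z < d1) by (eapply Rlt_le_trans; [apply Hz| eapply Rle_trans; [apply Rmin_l| apply Rmin_r]]).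
  assert (z3 : Cmod z < d2) by (eapply Rlt_le_trans; [apply Hz| apply Rmin_r]).
  assert (w1 : Cmod w < r / 4) by (eapply Rlt_le_trans; [apply Hw| eapply Rle_trans; [apply Rmin_l| apply Rmin_l]]).
  assert (w2 : Cmod w < d1) by (eapply Rlt_le_trans; [apply Hw| eapply Rle_trans; [apply Rmin_l| apply Rmin_r]]).
  assert (w3 : Cmod w < d2) by (eapply Rlt_le_trans; [apply Hw| apply Rmin_r]).
  assert (Hw1 : Cmod w < 1) by lra.
  pose proof (Cmod_ge_0 z) as z0. pose proof (Cmod_ge_0 w) as w0.
  assert (Htz : forall t, 0 < t <= 1 -> Cmod (Cmult (RtoC t) z) <= Cmod z).
  { intros t Ht. rewrite Cmod_scal by lra. nra. }
  assert (ImG : forall k, (k <= nu - 3)%nat -> Im (ev4 (G (3 + k)%nat) z w) = 0).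
  { apply (im_part nu G Rm r BR z w); auto; try lra.
    intros t Ht. specialize (Htz t Ht). destruct (Hreal (Cmult (RtoC t) z) w) as [A1 A2]; auto; lra. }
  assert (ImG' : forall k, (k <= nu - 3)%nat -> Im (ev4 (G' (3 + k)%nat) z w) = 0).
  { apply (im_part nu G' Rm' r BR' z w); auto; try lra.
    intros t Ht. specialize (Htz t Ht). destruct (Hreal (Cmult (RtoC t) z) w) as [A1 A2]; auto; lra. }
  set (f0 := ev2 f z w). set (g0 := ev2 g z w). set (h0 := ev2 h z w).
  set (M := Rabs (Re (mfun z w)) + rsum (fun k => Rabs (Re (ev4 (G (3 + k)%nat) z w))) (nu - 3) + Rabs BR).
  assert (M0 : 0 <= M).
  { unfold M. pose proof (Rabs_pos (Re (mfun z w))). pose proof (Rabs_pos BR).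
    assert (0 <= rsum (fun k => Rabs (Re (ev4 (G (3 + k)%nat) z w))) (nu - 3)) by (apply rsum_nonneg; intros; apply Rabs_pos).
    lra. }
  pose proof (Cmod_ge_0 f0) as f00. pose proof (Cmod_ge_0 g0) as g00.
  set (t0 := Rmin 1 (Rmin (r / (4 * (Cmod f0 + Cmod g0 + 1))) (d2 / (2 * (M + 1))))).
  assert (Ht0 : 0 < t0 <= 1).
  { split. unfold t0. repeat apply Rmin_pos; try lra; apply Rdiv_lt_0_compat; lra. apply Rmin_l. }
  assert (Ht0a : t0 <= r / (4 * (Cmod f0 + Cmod g0 + 1))) by (unfold t0; eapply Rle_trans; [apply Rmin_r| apply Rmin_l]).
  assert (Ht0b : t0 <= d2 / (2 * (M + 1))) by (unfold t0; eapply Rle_trans; [apply Rmin_r| apply Rmin_r]).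
  assert (Ht0f : t0 * (Cmod f0 + Cmod g0) <= r / 4).
  { apply Rle_trans with (t0 * (Cmod f0 + Cmod g0 + 1)). nra.
    apply Rmult_le_reg_r with (/ (Cmod f0 + Cmod g0 + 1)). apply Rinv_0_lt_compat; lra.
    rewrite Rmult_assoc, Rinv_r by lra. replace (r / 4 * / (Cmod f0 + Cmod g0 + 1)) with (r / (4 * (Cmod f0 + Cmod g0 + 1))) by (field; lra). lra. }
  assert (HF : forall t, 0 < t <= t0 -> Rabs (Re (Fdef nu G Rm (Cmult (RtoC t) z) w)) < d2).
  { intros t Ht. destruct (Fdef_scaled nu G Rm t z w HwG Hw1) as [E _]. rewrite E.
    assert (HR1 : Rabs (Re (ev4 Rm (Cmult (RtoC t) z) w)) <= t ^ (nu + 1) * BR).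
    { unfold ev4. apply (bnd4 Rm r BR (nu + 1) t); auto; try lra.
      rewrite Cmod_scal; try lra. apply Rmult_le_compat_l; lra.
      rewrite conj_scal, Cmod_scal, Cmod_conj; try lra. apply Rmult_le_compat_l; lra.
      rewrite Cmod_conj; lra. }
    assert (T1 : t ^ (nu + 1) <= t) by (rewrite <- (pow_1 t) at 2; apply pow_decr; [lra|lia]).
    assert (T2 : t ^ 2 <= t) by (rewrite <- (pow_1 t) at 2; apply pow_decr; [lra|lia]).
    assert (HS : Rabs (rsum (fun k => Re (ev4 (G (3 + k)%nat) z w) * t ^ (k + 3)) (nu - 3)) <=
                 t * rsum (fun k => Rabs (Re (ev4 (G (3 + k)%nat) z w))) (nu - 3)).
    { eapply Rle_trans. apply rsum_abs. rewrite <- rsum_scal. apply rsum_le. intros k.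
      rewrite Rabs_mult, (Rabs_right (t ^ _)) by (apply Rle_ge, pow_le; lra).
      rewrite Rmult_comm. apply Rmult_le_compat_r. apply Rabs_pos.
      rewrite <- (pow_1 t) at 2; apply pow_decr; [lra|lia]. }
    assert (HB1 : t ^ (nu + 1) * BR <= t * Rabs BR).
    { eapply Rle_trans. apply Rmult_le_compat_l. apply pow_le; lra. apply Rle_abs.
      apply Rmult_le_compat_r. apply Rabs_pos. auto. }
    assert (Hm : Rabs (t ^ 2 * Re (mfun z w)) <= t * Rabs (Re (mfun z w))).
    { rewrite Rabs_mult, (Rabs_right (t ^ 2)) by (apply Rle_ge, pow_le; lra).
      apply Rmult_le_compat_r. apply Rabs_pos. auto. }
    assert (Htot : Rabs (t ^ 2 * Re (mfun z w) + rsum (fun k => Re (ev4 (G (3 + k)%nat) z w) * t ^ (k + 3)) (nu - 3) +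
        Re (ev4 Rm (Cmult (RtoC t) z) w)) <= t * M).
    { eapply Rle_trans. apply Rabs_triang. eapply Rle_trans. apply Rplus_le_compat_r. apply Rabs_triang.
      unfold M. lra. }
    eapply Rle_lt_trans. exact Htot.
    apply Rle_lt_trans with (d2 / (2 * (M + 1)) * M). apply Rmult_le_compat_r; lra.
    apply Rmult_lt_reg_r with (2 * (M + 1)). lra.
    replace (d2 / (2 * (M + 1)) * M * (2 * (M + 1))) with (d2 * M) by (field; lra). nra. }
  assert (HEQ : forall t, 0 < t <= t0 ->
     Re (Fdef nu G Rm (Cmult (RtoC t) z) w) + t ^ nu * Re h0 =
     Re (Fdef nu G' Rm' (Cmult (RtoC t) (Cplus z (Cmult (RtoC (t ^ (nu - 2))) f0)))
                        (Cplus w (Cmult (RtoC (t ^ (nu - 2))) g0)))).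
  { intros t Ht. specialize (HF t Ht).
    assert (Htz' : Cmod (Cmult (RtoC t) z) < d2) by (specialize (Htz t ltac:(lra)); lra).
    specialize (Hmap (Cmult (RtoC t) z) w (RtoC (Re (Fdef nu G Rm (Cmult (RtoC t) z) w))) Htz' w3).
    rewrite Cmod_R in Hmap. specialize (Hmap HF eq_refl).
    rewrite (ev2_scal nu h t z w Hhw), (ev2_scal (nu - 1) f t z w Hfw), (ev2_scal (nu - 2) g t z w Hgw) in Hmap.
    fold f0 g0 h0 in Hmap.
    change (Re (Cplus ?x ?y)) with (Re x + Re y) in Hmap. rewrite RtoC_mult_re in Hmap.
    change (Re (RtoC ?x)) with x in Hmap. rewrite Hmap. f_equal. f_equal.
    replace (nu - 1)%nat with (S (nu - 2)) by lia. simpl pow.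
    replace (RtoC (t * t ^ (nu - 2))) with (Cmult (RtoC t) (RtoC (t ^ (nu - 2)))) by (unfold RtoC, Cmult; simpl; f_equal; ring).
    Cring. }
  pose proof (re_part nu G G' Rm Rm' r BR BR' BG' z w f0 g0 h0 t0 Hnu HwG HwG' (conj Hr r4) CR HRO CR' HR'O CG
      ltac:(lra) ltac:(lra) Ht0 Ht0f HEQ) as RP.
  split.
  - intros mu Hmu. replace mu with (3 + (mu - 3))%nat by lia.
    specialize (RP (mu - 3)%nat ltac:(lia)). destruct (Nat.eq_dec (mu - 3) (nu - 3)); [lia|].
    apply Ceq. lra. rewrite ImG, ImG'; auto; lia.
  - specialize (RP (nu - 3)%nat ltac:(lia)). destruct (Nat.eq_dec (nu - 3) (nu - 3)); [|lia].
    replace (3 + (nu - 3))%nat with nu in RP by lia.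
    pose proof (corr_twoRe z w f0 g0 h0 Hw1) as CT. cbv zeta in CT.
    unfold corr. cbv zeta. fold f0 g0 h0. rewrite CT.
    assert (IG : Im (ev4 (G nu) z w) = 0) by (replace nu with (3 + (nu - 3))%nat by lia; apply ImG; lia).
    assert (IG' : Im (ev4 (G' nu) z w) = 0) by (replace nu with (3 + (nu - 3))%nat by lia; apply ImG'; lia).
    assert (IL : Im (Lx z w f0 g0) = 0).
    { pose proof (corr_twoRe z w f0 g0 (RtoC 0) Hw1) as CT0. cbv zeta in CT0.
      pose proof (Im_twoRe (Cminus (Cplus (Cmult (Cdiv (Cplus (Cconj z) (Cmult z (Cconj w))) (Cminus (RtoC 1) (Cmult w (Cconj w)))) f0)
          (Cmult (Cdiv (Cpow (Cplus (Cconj z) (Cmult z (Cconj w))) 2)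
                 (Cmult (RtoC 2) (Cpow (Cminus (RtoC 1) (Cmult w (Cconj w))) 2))) g0)) (Cmult (RtoC (/ 2)) (RtoC 0)))) as I0.
      rewrite CT0 in I0. change (Im (Cminus ?x ?y)) with (Im x - Im y) in I0.
      change (Im (RtoC ?a)) with 0 in I0. lra. }
    apply Ceq.
    + change (Re (Cminus ?x ?y)) with (Re x - Re y). change (Re (Cminus ?x ?y)) with (Re x - Re y). change (Re (RtoC ?a)) with a. lra.
    + change (Im (Cminus ?x ?y)) with (Im x - Im y). change (Im (Cminus ?x ?y)) with (Im x - Im y). change (Im (RtoC ?a)) with 0. lra.
Qed.
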